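(* Let $\Sigma$ be a set containing $0$, $(\Gamma,\oplus)$ an abelian group, and $f:\Sigma^n\to\Gamma$. Suppose $f(\bar x)=\bigoplus_{i=1}^k f_i(\bar x_{K_i})=\bigoplus_{j=1}^l g_j(\bar x_{L_j})$ for all $\bar x\in\Sigma^n$, where $\{K_1,\ldots,K_k\}$ and $\{L_1,\ldots,L_l\}$ are partitions of $[n]$ into nonempty sets and every $f_i$ and every $g_j$ has non-separable arguments. Then $\{K_1,\ldots,K_k\}=\{L_1,\ldots,L_l\}$ (so $k=l$), and whenever $K_i=L_j$ the function $f_i\ominus g_j$ is constant.
   Context: $[n]=\{1,\ldots,n\}$; for $M=\{i_1<\cdots<i_m\}\subseteq[n]$ and $\bar x=(x_1,\ldots,x_n)$, $\bar x_M=(x_{i_1},\ldots,x_{i_m})$. A function $h:\Sigma^m\to\Gamma$ has $P$-separable arguments (for a partition $P=\{P_1,\ldots,P_p\}$ of $[m]$ into nonempty sets) if there exist functions $h_j:\Sigma^{|P_j|}\to\Gamma$ with $h(\bar x)=h_1(\bar x_{P_1})\oplus\cdots\oplus h_p(\bar x_{P_p})$ for all $\bar x$; $h$ has non-separable arguments if $h$ has $P$-separable arguments only for the one-block partition $P=\{[m]\}$. *)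

(* Defs.v *)
From HB Require Import structures.
From mathcomp Require Import all_boot all_order all_algebra.
Set Implicit Arguments. Unset Strict Implicit. Unset Printing Implicit Defensive.
Import GRing.Theory.
Local Open Scope ring_scope.

(* Sigma^m is modelled as m.-tuple Sigma; indices [m] = {1..m} as 'I_m = {0..m-1}. *)

(* x_M : the restriction of x to the coordinates in M, listed in increasing order
   (enum of a set of ordinals is increasing). *)
Definition restr (S : Type) (m : nat) (x : m.-tuple S) (M : {set 'I_m})
  : #|M|.-tuple S := [tuple tnth x (enum_val i) | i < #|M|].

Definition nonempty_partition (m : nat) (P : {set {set 'I_m}}) : bool :=
  partition P [set: 'I_m] && (set0 \notin P).

Definition P_separable (S : Type) (G : zmodType) (m : nat)
  (h : m.-tuple S -> G) (P : {set {set 'I_m}}) : Prop :=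
  exists hs : forall B : {set 'I_m}, #|B|.-tuple S -> G,
    forall x : m.-tuple S, h x = \sum_(B in P) hs B (restr x B).

Definition non_separable (S : Type) (G : zmodType) (m : nat)
  (h : m.-tuple S -> G) : Prop :=
  forall P : {set {set 'I_m}}, nonempty_partition P ->
    P_separable h P -> P = [set [set: 'I_m]].

(* Main.v *)
Require Import Defs.
From HB Require Import structures.
From mathcomp Require Import all_boot all_order all_algebra.
Import GRing.Theory.
Local Open Scope ring_scope.

Set Implicit Arguments.
Section A.
Variables (S : Type) (zero : S).

Definition ext m (B : {set 'I_m}) (y : #|B|.-tuple S) : m.-tuple S :=
  [tuple if j \in B then nth zero y (index j (enum B)) else zero | j < m].



Lemma ext_in m (B : {set 'I_m}) y j (Hj : j \in B) :
  tnth (ext y) j = tnth y (enum_rank_in Hj j).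
Proof.
rewrite tnth_mktuple Hj (tnth_nth zero); congr nth.
rewrite enum_rank_in.unlock insubdK //.
by rewrite cardE unfold_in /= index_mem mem_enum.
Qed.

Lemma ext_out m (B : {set 'I_m}) (y : #|B|.-tuple S) j : j \notin B -> tnth (ext y) j = zero.
Proof. by rewrite tnth_mktuple => /negbTE ->. Qed.

Lemma restr_dep m (x x' : m.-tuple S) (B : {set 'I_m}) :
  (forall j, j \in B -> tnth x j = tnth x' j) -> restr x B = restr x' B.
Proof.
move=> H; apply: eq_from_tnth => i; rewrite !tnth_mktuple; apply: H.
exact: enum_valP.
Qed.

Lemma restr_ext m (B : {set 'I_m}) (y : #|B|.-tuple S) : restr (ext y) B = y.
Proof.
apply: eq_from_tnth => i; rewrite tnth_mktuple.
have Hj := enum_valP i.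
by rewrite (ext_in _ Hj) enum_valK_in.
Qed.

Lemma ext_restr m (B : {set 'I_m}) (x : m.-tuple S) j :
  j \in B -> tnth (ext (restr x B)) j = tnth x j.
Proof.
move=> Hj; rewrite (ext_in _ Hj) tnth_mktuple enum_rankK_in //.
Qed.

Lemma restr_ext_dep m (B C : {set 'I_m}) (y y' : #|B|.-tuple S) :
  (forall i : 'I_#|B|, enum_val i \in C -> tnth y i = tnth y' i) ->
  restr (ext y) C = restr (ext y') C.
Proof.
move=> H; apply: restr_dep => j jC.
case: (boolP (j \in B)) => Hj; last by rewrite !ext_out.
rewrite !(ext_in _ Hj); apply: H; by rewrite enum_rankK_in.
Qed.


Lemma two_block (G : zmodType) m (h : m.-tuple S -> G) (D : {set 'I_m})
  (u v : m.-tuple S -> G) :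
  D != set0 -> D != setT ->
  (forall y, h y = u y + v y) ->
  (forall y y', (forall j, j \in D -> tnth y j = tnth y' j) -> u y = u y') ->
  (forall y y', (forall j, j \notin D -> tnth y j = tnth y' j) -> v y = v y') ->
  ~ non_separable h.
Proof.
move=> D0 DT huv hu hv NS.
have C0 : ~: D != set0.
  apply: contra DT => /eqP E; by rewrite -[D]setCK E setC0.
have DC : D != ~: D.
  case/set0Pn: D0 => j jD; apply/eqP => E.
  by have := jD; rewrite {1}E inE jD.
have NP : nonempty_partition [set D; ~: D].
  rewrite /nonempty_partition /partition.
  have H0 : set0 \notin [set D; ~: D] by rewrite !inE negb_or !(eq_sym set0) D0 C0.
  rewrite H0 andbT /cover big_setU1 /= ?big_set1 ?setUCr ?eqxx /=; last by rewrite inE.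
  rewrite andbT.
  apply/trivIsetP => A B; rewrite !inE => /orP[]/eqP-> /orP[]/eqP->;
    rewrite ?eqxx // => _.
    by rewrite disjoints_subset setCK subxx.
  by rewrite disjoints_subset subxx.
have SP : P_separable h [set D; ~: D].
  exists (fun E z => if E == D then u (ext z) else v (ext z)) => y.
  have DC' : ~: D != D by rewrite eq_sym.
  rewrite big_setU1 /= ?big_set1 ?inE // eqxx (negbTE DC').
  rewrite huv; congr (_ + _).
    by apply: hu => j jD; rewrite ext_restr.
  by apply: hv => j jD; rewrite ext_restr // inE.
have := NS _ NP SP => E.
have : D \in [set D; ~: D] by rewrite !inE eqxx.
by rewrite E inE => /eqP DT'; rewrite DT' eqxx in DT.
Qed.

Definition z0 n : n.-tuple S := [tuple zero | _ < n].

Lemma decomp (G : zmodType) n (K : {set {set 'I_n}})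
  (F : forall B : {set 'I_n}, #|B|.-tuple S -> G) (B : {set 'I_n}) (y : #|B|.-tuple S) :
  trivIset K -> B \in K ->
  \sum_(C in K) F C (restr (ext y) C) =
  F B y + \sum_(C in K | C != B) F C (restr (z0 n) C).
Proof.
move=> /trivIsetP tK BK; rewrite (bigD1 B) //= restr_ext; congr (_ + _).
apply: eq_bigr => C /andP[CK CB].
have -> // : restr (ext y) C = restr (z0 n) C.
apply: restr_dep => j jC; rewrite ext_out ?tnth_mktuple //.
by rewrite (disjointFl (tK _ _ BK CK _)) // eq_sym.
Qed.


Lemma same_block n (K : {set {set 'I_n}}) (B B' : {set 'I_n}) :
  trivIset K -> set0 \notin K -> B \in K -> B' \in K -> B \subset B' -> B = B'.
Proof.
move=> /trivIsetP tK K0 BK B'K BB'.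
apply/eqP; apply: contraT => NE.
have /set0Pn [j jB] : B != set0 by apply: contraNneq K0 => <-.
have := disjointFr (tK _ _ BK B'K NE) jB.
by rewrite (subsetP BB' _ jB).
Qed.

Lemma sum_eq (G : zmodType) n (f : n.-tuple S -> G) (K L : {set {set 'I_n}})
  (fs gs : forall B : {set 'I_n}, #|B|.-tuple S -> G) (B : {set 'I_n}) :
  nonempty_partition K ->
  (forall x : n.-tuple S, f x = \sum_(B in K) fs B (restr x B)) ->
  (forall x : n.-tuple S, f x = \sum_(B in L) gs B (restr x B)) ->
  B \in K ->
  exists c, forall y : #|B|.-tuple S, fs B y = c + \sum_(C in L) gs C (restr (ext y) C).
Proof.
move=> /andP[/and3P[_ tK _] _] hK hL BK.
exists (- \sum_(C in K | C != B) fs C (restr (z0 n) C)) => y.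
have E : \sum_(C in K) fs C (restr (ext y) C) = \sum_(C in L) gs C (restr (ext y) C).
  by rewrite -hK -hL.
by rewrite -E decomp // (addrC (fs B y)) addKr.
Qed.

Lemma block_in (G : zmodType) n (f : n.-tuple S -> G) (K L : {set {set 'I_n}})
  (fs gs : forall B : {set 'I_n}, #|B|.-tuple S -> G) :
  nonempty_partition K -> nonempty_partition L ->
  (forall B, B \in K -> non_separable (fs B)) ->
  (forall x : n.-tuple S, f x = \sum_(B in K) fs B (restr x B)) ->
  (forall x : n.-tuple S, f x = \sum_(B in L) gs B (restr x B)) ->
  forall B, B \in K -> exists2 C, C \in L & B \subset C.
Proof.
move=> PK PL NS hK hL B BK.
have [c Hc] := @sum_eq _ _ _ _ _ _ _ _ PK hK hL BK.
move: PK PL => /andP[/and3P[_ tK K0] _] /andP[/and3P[/eqP cL tL L0] _].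
case: (boolP [exists C in L, B \subset C]).
  by case/existsP => C /andP[CL BC]; exists C.
move=> H; exfalso.
have /set0Pn [j0 j0B] : B != set0 by apply: contraNneq K0 => <-.
have : j0 \in cover L by rewrite cL inE.
case/bigcupP => C0 C0L j0C0.
pose D := [set i : 'I_#|B| | enum_val i \in C0].
have D0 : D != set0.
  apply/set0Pn; exists (enum_rank_in j0B j0); by rewrite inE enum_rankK_in.
have DT : D != setT.
  apply: contra H => /eqP DT; apply/existsP; exists C0; rewrite C0L /=.
  apply/subsetP => j jB.
  have : enum_rank_in jB j \in D by rewrite DT inE.
  by rewrite inE enum_rankK_in.
apply: (@two_block _ _ (fs B) D (fun y => c + gs C0 (restr (ext y) C0))
   (fun y => \sum_(C in L | C != C0) gs C (restr (ext y) C)) D0 DT).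
- by move=> y; rewrite Hc (bigD1 C0) //= addrA.
- move=> y y' Hy.
  have -> // : restr (ext y) C0 = restr (ext y') C0.
  by apply: restr_ext_dep => i Hi; apply: Hy; rewrite inE.
- move=> y y' Hy; apply: eq_bigr => C /andP[CL CC0].
  have -> // : restr (ext y) C = restr (ext y') C.
  apply: restr_ext_dep => i Hi; apply: Hy; rewrite inE.
  move/trivIsetP: tL => tL.
  by rewrite (disjointFr (tL _ _ CL C0L CC0) Hi).
- exact: NS.
Qed.

End A.

Theorem lemmaA4 (S : Type) (zero : S) (G : zmodType) (n : nat)
  (f : n.-tuple S -> G) (K L : {set {set 'I_n}})
  (fs gs : forall B : {set 'I_n}, #|B|.-tuple S -> G) :
  nonempty_partition K -> nonempty_partition L ->
  (forall B, B \in K -> non_separable (fs B)) ->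
  (forall B, B \in L -> non_separable (gs B)) ->
  (forall x : n.-tuple S, f x = \sum_(B in K) fs B (restr x B)) ->
  (forall x : n.-tuple S, f x = \sum_(B in L) gs B (restr x B)) ->
  K = L /\
  (forall B, B \in K -> B \in L ->
     exists c : G, forall y : #|B|.-tuple S, fs B y - gs B y = c).
Proof.
move=> PK PL NK NL hK hL; split.
  have sub : forall (K L : {set {set 'I_n}}) fs gs,
      nonempty_partition K -> nonempty_partition L ->
      (forall B, B \in K -> non_separable (fs B)) ->
      (forall B, B \in L -> non_separable (gs B)) ->
      (forall x : n.-tuple S, f x = \sum_(B in K) fs B (restr x B)) ->
      (forall x : n.-tuple S, f x = \sum_(B in L) gs B (restr x B)) ->
      K \subset L.
    move=> K' L' fs' gs' PK' PL' NK' NL' hK' hL'; apply/subsetP => B BK.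
    have [C CL BC] := @block_in _ zero _ _ _ _ _ _ _ PK' PL' NK' hK' hL' B BK.
    have [B' B'K CB'] := @block_in _ zero _ _ _ _ _ _ _ PL' PK' NL' hL' hK' C CL.
    move: (PK') (PL') => /andP[/and3P[_ tK K0] _] /andP[/and3P[_ tL L0] _].
    have EB : B = B' := same_block tK K0 BK B'K (subset_trans BC CB').
    have EC : C = B.
      by apply/eqP; rewrite eqEsubset BC andbT EB.
    by rewrite -EC.
  apply/eqP; rewrite eqEsubset.
  by rewrite (sub K L fs gs) ?(sub L K gs fs).
move=> B BK BL.
have [c1 H1] := @sum_eq _ zero _ _ _ _ _ _ _ _ PK hK hL BK.
move: (PL) => /andP[/and3P[_ tL _] _].
exists (c1 + \sum_(C in L | C != B) gs C (restr (z0 zero n) C)) => y.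
by rewrite H1 decomp // (addrC (gs B y)) addrA addrK.
Qed.
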